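(* For every positive integer $k$, $$\sum_{r=1}^{2k} r!\,{2k\brace r}=\sum_{p=1}^{k}\sum_{q=1}^{k}{k\brace p}{k\brace q}\,p!\,q!\,D(p,q).$$
   Context: ${k\brace r}$ denotes the Stirling number of the second kind (number of partitions of a $k$-element set into $r$ nonempty blocks). $D(m,n)$ is the Delannoy number, defined for nonnegative integers $m,n$ by $D(m,n)=1$ if $mn=0$, and $D(m,n)=D(m-1,n)+D(m-1,n-1)+D(m,n-1)$ if $mn\neq0$. *)

(* Defs.v *)
From mathcomp Require Import all_boot.

Fixpoint stirling2 (n k : nat) : nat :=
  match n, k with
  | 0, 0 => 1
  | 0, _.+1 => 0
  | _.+1, 0 => 0
  | n'.+1, k'.+1 => k'.+1 * stirling2 n' k'.+1 + stirling2 n' k'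
  end.

(* Delannoy numbers: D(m,n)=1 if mn=0, else D(m-1,n)+D(m-1,n-1)+D(m,n-1). *)
Fixpoint delannoy (m n : nat) : nat :=
  match m with
  | 0 => 1
  | m'.+1 =>
    let fix aux (n : nat) : nat :=
      match n with
      | 0 => 1
      | n'.+1 => delannoy m' n + delannoy m' n' + aux n'
      end
    in aux n
  end.

Example stirling2_test : [:: stirling2 4 1; stirling2 4 2; stirling2 4 3; stirling2 4 4; stirling2 5 2] = [:: 1; 7; 6; 1; 15].
Proof. by []. Qed.
Example delannoy_test : [:: delannoy 1 1; delannoy 2 2; delannoy 3 3; delannoy 2 3] = [:: 3; 13; 63; 25].
Proof. by []. Qed.

(* Main.v *)
Require Import Defs.
From mathcomp Require Import all_boot zify.

Lemma delS m n : delannoy m.+1 n.+1 = delannoy m n.+1 + delannoy m n + delannoy m.+1 n.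
Proof. by []. Qed.
Lemma del0r p : delannoy p 0 = 1. Proof. by case: p. Qed.
Lemma del0l q : delannoy 0 q = 1. Proof. by []. Qed.
Lemma del1l q : delannoy 1 q = 2 * q + 1.
Proof. elim: q => [//|q IH]; rewrite delS IH !del0l; lia. Qed.
Lemma del1r p : delannoy p 1 = 2 * p + 1.
Proof. elim: p => [//|p IH]; rewrite delS IH !del0r; lia. Qed.

Lemma delId p q : p * delannoy p q + p.+1 * delannoy p.+1 q
  = q * delannoy p q + q.+1 * delannoy p q.+1.
Proof.
elim: p q => [|p IHp] q.
  rewrite del1l !del0l; lia.
elim: q => [|q IHq].
  rewrite !del0r del1r; lia.
have IH1 := IHp q.+1. have IH2 := IHp q.
rewrite !delS in IH1 IHq *.
lia.
Qed.

Definition sur n p := p`! * stirling2 n p.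

Lemma stirling2_gt n p : n < p -> stirling2 n p = 0.
Proof.
elim: n p => [|n IH] [|p] //= hp.
rewrite !IH //; lia.
Qed.

Lemma sur_gt n p : n < p -> sur n p = 0.
Proof. by move=> h; rewrite /sur stirling2_gt ?muln0. Qed.

Lemma surS n p : sur n.+1 p = p * (sur n p + sur n p.-1).
Proof.
case: p => [|p]; first by rewrite /sur /= muln0.
rewrite /sur /= factS; nia.
Qed.

Lemma sur0 q : sur 0 q = (q == 0).
Proof. by case: q => [|q] //; rewrite /sur /= muln0. Qed.

Lemma shiftL (u w : nat -> nat) K : u K = 0 ->
  \sum_(0 <= p < K.+1) (p * (u p + u p.-1)) * w p =
  \sum_(0 <= p < K.+1) u p * (p * w p + p.+1 * w p.+1).
Proof.
move=> hK.
have -> : \sum_(0 <= p < K.+1) (p * (u p + u p.-1)) * w p =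
   \sum_(0 <= p < K.+1) p * u p * w p + \sum_(0 <= p < K.+1) p * u p.-1 * w p.
  by rewrite -big_split; apply: eq_bigr => i _; rewrite mulnDr mulnDl.
have -> : \sum_(0 <= p < K.+1) u p * (p * w p + p.+1 * w p.+1) =
   \sum_(0 <= p < K.+1) p * u p * w p + \sum_(0 <= p < K.+1) p.+1 * u p * w p.+1.
  rewrite -big_split; apply: eq_bigr => i _; rewrite mulnDr; congr (_ + _).
    by rewrite mulnA (mulnC (u i)).
  by rewrite mulnA (mulnC (u i)).
congr (_ + _).
rewrite big_nat_recl // mul0n mul0n add0n.
by rewrite big_nat_recr //= hK muln0 mul0n addn0.
Qed.

Definition B (u v : nat -> nat) K :=
  \sum_(0 <= p < K.+1) \sum_(0 <= q < K.+1) u p * v q * delannoy p q.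

Lemma Bsymm u v K : u K = 0 -> v K = 0 ->
  B (fun p => p * (u p + u p.-1)) v K = B u (fun q => q * (v q + v q.-1)) K.
Proof.
move=> hu hv; rewrite /B.
transitivity (\sum_(0 <= p < K.+1) \sum_(0 <= q < K.+1)
   u p * v q * (q * delannoy p q + q.+1 * delannoy p q.+1)).
  rewrite exchange_big_nat.
  transitivity (\sum_(0 <= q < K.+1) \sum_(0 <= p < K.+1)
    u p * v q * (p * delannoy p q + p.+1 * delannoy p.+1 q)).
    apply: eq_bigr => q _.
    transitivity (\sum_(0 <= p < K.+1) (p * (u p + u p.-1)) * (v q * delannoy p q)).
      by apply: eq_bigr => p _; rewrite mulnA.
    rewrite shiftL //; apply: eq_bigr => p _.
    rewrite -(mulnA (u p)); congr (_ * _); nia.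
  rewrite exchange_big_nat; apply: eq_bigr => p _; apply: eq_bigr => q _.
  by rewrite delId.
apply: eq_bigr => p _.
transitivity (\sum_(0 <= q < K.+1) (q * (v q + v q.-1)) * (u p * delannoy p q)).
  2: by apply: eq_bigr => q _; nia.
rewrite shiftL //; apply: eq_bigr => q _; nia.
Qed.

Lemma Bmain N a b : a + b = N -> B (sur a) (sur b) N.+1 = B (sur N) (sur 0) N.+1.
Proof.
elim: b a => [|b IH] a hab; first by rewrite addn0 in hab; subst.
rewrite -(IH a.+1); last by lia.
have -> : B (sur a) (sur b.+1) N.+1 = B (sur a) (fun q => q * (sur b q + sur b q.-1)) N.+1.
  by rewrite /B; apply: eq_bigr => p _; apply: eq_bigr => q _; rewrite surS.
rewrite -Bsymm; try (apply: sur_gt; lia).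
by rewrite /B; apply: eq_bigr => p _; apply: eq_bigr => q _; rewrite surS.
Qed.

Lemma B0 N K : B (sur N) (sur 0) K = \sum_(0 <= p < K.+1) sur N p.
Proof.
rewrite /B; apply: eq_bigr => p _.
rewrite big_nat_recl // sur0 del0r /= muln1 big1 ?addn0 ?muln1 // => i _; rewrite sur0 /= muln0 mul0n.
by [].
Qed.

Lemma sum_tail m n1 n2 (F : nat -> nat) : m <= n1 -> n1 <= n2 ->
  (forall i, n1 <= i -> F i = 0) ->
  \sum_(m <= i < n2) F i = \sum_(m <= i < n1) F i.
Proof.
move=> h1 h2 hF; rewrite (@big_cat_nat _ _ _ n1) //=.
rewrite [X in _ + X]big_nat_cond [X in _ + X]big1 ?addn0 //.
by move=> i /andP[/andP[hi _] _]; apply: hF.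
Qed.

Lemma sur_n0 n : 0 < n -> sur n 0 = 0.
Proof. by case: n => [//|n] _; rewrite /sur /= muln0. Qed.

Theorem corollary1 (k : nat) (hk : 0 < k) :
  \sum_(1 <= r < (2 * k).+1) r`! * stirling2 (2 * k) r =
  \sum_(1 <= p < k.+1) \sum_(1 <= q < k.+1)
     stirling2 k p * stirling2 k q * p`! * q`! * delannoy p q.
Proof.
have E := Bmain (2 * k) k k ltac:(lia).
rewrite B0 /B in E.
have L : \sum_(0 <= p < (2 * k).+2) sur (2 * k) p =
   \sum_(1 <= r < (2 * k).+1) r`! * stirling2 (2 * k) r.
  rewrite big_ltn // sur_n0; last by lia.
  rewrite big_nat_recr /=; last by lia.
  by rewrite sur_gt ?addn0 ?add0n; last by lia.
rewrite -L -E.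
rewrite (@sum_tail 0 k.+1); [|lia|lia|].
  2: by move=> i hi; apply: big1_seq => j _; rewrite sur_gt ?mul0n //; lia.
rewrite big_ltn // big1_seq ?add0n; last by move=> j _; rewrite sur_n0 ?mul0n.
apply: eq_bigr => p _.
rewrite (@sum_tail 0 k.+1); [|lia|lia|].
  2: by move=> i hi; rewrite (sur_gt k i) ?muln0 ?mul0n //; lia.
rewrite big_ltn // sur_n0 // muln0 mul0n add0n.
apply: eq_bigr => q _; rewrite /sur; nia.
Qed.
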